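(* The signature of any matchings circuit is windable.
   Context: A matchings circuit $G$ consists of: a finite set $J$ of incidences; a finite vertex set $V$ with sets $J_v$ partitioning $J$; a set $A\subseteq J$ of external edges; a partition $E$ of $J\setminus A$ into pairs (internal edges); a rational edge-weight $w(e)\ge0$ for each $e\in E$; and a rational fugacity $\lambda(v)\ge0$ for each $v$. For $F\subseteq A\cup E$, $\deg_F(v)$ is the number of incidences in $J_v$ belonging to edges of $F$; $\mathrm{wt}_G(F)=0$ if some $\deg_F(v)\ge2$, else $\prod_{v:\deg_F(v)=0}\lambda(v)\prod_{e\in F\cap E}w(e)$. The signature $[\![G]\!]:\{0,1\}^A\to\mathbb{Q}_{\ge0}$ is $[\![G]\!](x)=\sum\mathrm{wt}_G(F)$ over $F\subseteq A\cup E$ with $F\cap A=\{a:x_a=1\}$. For $x,y\in\{0,1\}^A$, $x\oplus y$ is coordinatewise addition mod 2, $\mathbf S$ the characteristic vector of $S$; $\mathrm{Match}'(z)$ is the set of partitions of $\{i:z_i=1\}$ into blocks of size 1 or 2. $F:\{0,1\}^A\to\mathbb{Q}_{\ge0}$ is windable if there exist $B(x,y,M)\ge0$ for all $x,y$ and $M\in\mathrm{Match}'(x\oplus y)$ with $F(x)F(y)=\sum_{M\in\mathrm{Match}'(x\oplus y)}B(x,y,M)$ for all $x,y$, and $B(x,y,M)=B(x\oplus\mathbf S,y\oplus\mathbf S,M)$ for all $x,y$ and all $S\in M\in\mathrm{Match}'(x\oplus y)$. *)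

(* Defs.v *)
From HB Require Import structures.
From mathcomp Require Import all_boot all_order all_algebra.
Set Implicit Arguments. Unset Strict Implicit. Unset Printing Implicit Defensive.
Import Order.TTheory GRing.Theory Num.Theory.
Local Open Scope ring_scope.

(* A matchings circuit: incidences J (finType), vertices V (finType),
   vtx : J -> V gives the partition J = disjoint union of J_v := vtx^-1(v),
   A : {set J} external edges (each a single incidence),
   E : {set {set J}} internal edges, a partition of J \ A into 2-element sets,
   w : edge weights, lam : fugacities. *)

(* x (+) y on {0,1}^A, with vectors represented as subsets of A *)
Definition symdiff (T : finType) (x y : {set T}) : {set T} :=
  (x :\: y) :|: (y :\: x).

Definition degF (J V : finType) (vtx : J -> V) (x : {set J})
  (Fe : {set {set J}}) (v : V) : nat :=
  #|[set j in x :|: cover Fe | vtx j == v]|.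

Definition wtG (J V : finType) (vtx : J -> V) (w : {set J} -> rat)
  (lam : V -> rat) (x : {set J}) (Fe : {set {set J}}) : rat :=
  if [exists v, 2 <= degF vtx x Fe v]%N then 0
  else (\prod_(v | degF vtx x Fe v == 0%N) lam v) * \prod_(e in Fe) w e.

(* signature [[G]](x) for x \subset A: sum over F subset of A u E with
   F n A = x, i.e. over sets Fe of internal edges *)
Definition signature (J V : finType) (vtx : J -> V) (E : {set {set J}})
  (w : {set J} -> rat) (lam : V -> rat) (x : {set J}) : rat :=
  \sum_(Fe : {set {set J}} | Fe \subset E) wtG vtx w lam x Fe.

Definition is_matching_circuit (J V : finType) (vtx : J -> V) (A : {set J})
  (E : {set {set J}}) (w : {set J} -> rat) (lam : V -> rat) : Prop :=
  [/\ partition E (~: A), (forall e, e \in E -> #|e| = 2%N),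
      (forall e, e \in E -> 0 <= w e) & (forall v, 0 <= lam v)].

Definition Match' (T : finType) (z : {set T}) (M : {set {set T}}) : bool :=
  partition M z && [forall S in M, (#|S| == 1%N) || (#|S| == 2%N)].

Definition windable (T : finType) (A : {set T}) (F : {set T} -> rat) : Prop :=
  exists B : {set T} -> {set T} -> {set {set T}} -> rat,
    [/\ (forall (x y : {set T}) (M : {set {set T}}), x \subset A -> y \subset A -> Match' (symdiff x y) M ->
           0 <= B x y M),
        (forall x y : {set T}, x \subset A -> y \subset A ->
           F x * F y = \sum_(M : {set {set T}} | Match' (symdiff x y) M) B x y M)
      & (forall (x y S : {set T}) (M : {set {set T}}), x \subset A -> y \subset A -> Match' (symdiff x y) M ->
           S \in M -> B x y M = B (symdiff x S) (symdiff y S) M)].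

(* Main.v *)
Require Import Defs.
From HB Require Import structures.
From mathcomp Require Import all_boot all_order all_algebra.
From mathcomp Require Import zify.
Set Implicit Arguments. Unset Strict Implicit. Unset Printing Implicit Defensive.
Import Order.TTheory GRing.Theory Num.Theory.

Definition rhoF (T : Type) (sg ta : T -> T) (j : T) := sg (ta j).

Section Invol.
Variable T : finType.
Variables sg ta : T -> T.
Hypothesis sgK : involutive sg.
Hypothesis taK : involutive ta.
Local Notation rho := (rhoF sg ta).

Lemma rho_inj : injective rho.
Proof. move=> a b; rewrite /rhoF => h. by rewrite -[a]taK -[b]taK -[ta a]sgK h sgK. Qed.

Lemma rho_sg_rho j : rho (sg (rho j)) = sg j.
Proof. by rewrite /rhoF sgK taK. Qed.

Lemma iter_sg k j : iter k rho (sg (iter k rho j)) = sg j.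
Proof.
elim: k j => [|k IH] j //. rewrite [iter k.+1 rho j]/=.
by rewrite iterSr rho_sg_rho IH.
Qed.

Lemma fix2 a b : sg a = a -> fconnect rho a b -> sg b = b ->
  b \in [set a; iter (order rho a)./2 rho a].
Proof.
move=> sa ab sb.
have := iter_findex ab; set k := findex rho a b => bk.
have kn : k < order rho a by apply: findex_max.
have e2 : iter (k + k) rho a = a.
  by rewrite iterD bk -{1}sb -{1}bk iter_sg sa.
have ino := iter_order rho_inj a.
set n := order rho a in kn ino *.
have f0 := findex0 rho a.
rewrite !inE -bk.
case: (ltnP (k + k) n) => h.
  have := findex_iter h; rewrite e2 f0 => k0.
  by apply/orP; left; apply/eqP; have -> : k = 0 by lia.
have h2 : k + k - n < n by lia.
have e3 : iter (k + k - n) rho a = a.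
  by rewrite -{2}e2 -[in RHS](subnK h) iterD ino.
have := findex_iter h2; rewrite e3 f0 => k0.
have nk : n = k.*2 by rewrite -addnn; lia.
by rewrite nk doubleK eqxx orbT.
Qed.

Lemma fix_card a : sg a = a ->
  #|[set b | fconnect rho a b & sg b == b]| <= 2.
Proof.
move=> sa.
apply: leq_trans (_ : #|[set a; iter (order rho a)./2 rho a]| <= 2).
  apply: subset_leq_card; apply/subsetP => b; rewrite inE => /andP[ab /eqP sb].
  exact: fix2.
by rewrite cards2; case: eqP.
Qed.

Lemma sg_conn a b : sg a = a -> fconnect rho a b -> fconnect rho a (sg b).
Proof.
move=> sa ab; have := iter_findex ab; set k := findex rho a b => bk.
rewrite fconnect_sym; last exact: rho_inj.
have <- : iter k rho (sg b) = a by rewrite -bk iter_sg sa.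
exact: fconnect_iter.
Qed.

End Invol.
Lemma in_symdiff (T : finType) (x y : {set T}) j :
  (j \in symdiff x y) = (j \in x) (+) (j \in y).
Proof. by rewrite !inE; case: (j \in x); case: (j \in y). Qed.

Lemma symdiffK (T : finType) (x y : {set T}) : symdiff (symdiff x y) y = x.
Proof. by apply/setP => j; rewrite !in_symdiff -addbA addbb addbF. Qed.

Section Circ.
Variables (J V : finType) (vtx : J -> V) (A : {set J}) (E : {set {set J}})
  (w : {set J} -> rat) (lam : V -> rat).
Hypothesis Hc : is_matching_circuit vtx A E w lam.

Lemma HcovE : cover E = ~: A.
Proof. by case: Hc => /and3P[/eqP -> _ _]. Qed.
Lemma HtrivE : trivIset E.
Proof. by case: Hc => /and3P[_ -> _]. Qed.
Lemma Hcard2 e : e \in E -> #|e| = 2.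
Proof. by case: Hc => _ h _ _; apply: h. Qed.

Definition sg j := if j \in A then j else odflt j [pick j' in pblock E j | j' != j].

Lemma sgA j : j \in A -> sg j = j.
Proof. by rewrite /sg => ->. Qed.

Lemma sg_props j : j \notin A ->
  [/\ pblock E j \in E, pblock E j = [set j; sg j], sg j != j &
      pblock E (sg j) = pblock E j].
Proof.
move=> jA.
have jc : j \in cover E by rewrite HcovE inE.
have eE := pblock_mem jc.
have je : j \in pblock E j by rewrite mem_pblock.
have c2 := Hcard2 eE.
rewrite /sg (negbTE jA).
case: pickP => [j' /andP[j'e nj] | none] /=.
  have eq : pblock E j = [set j; j'].
    apply/eqP; rewrite eq_sym eqEcard; apply/andP; split.
      by apply/subsetP => i; rewrite !inE => /orP[] /eqP ->.
    by rewrite c2 cards2 eq_sym nj.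
  split => //.
  by apply: def_pblock => //; [exact: HtrivE].
exfalso.
have : pblock E j \subset [set j].
  apply/subsetP => i ie; rewrite inE; apply/negPn/negP => nij.
  by have := none i; rewrite ie nij.
by move/subset_leq_card; rewrite c2 cards1.
Qed.

Lemma sg_notA j : j \notin A -> sg j \notin A.
Proof.
move=> jA; case: (sg_props jA) => eE de _ _.
have : sg j \in cover E.
  apply/bigcupP; exists (pblock E j) => //; rewrite de !inE eqxx orbT //.
by rewrite HcovE inE.
Qed.

Lemma sgK : involutive sg.
Proof.
move=> j; case: (boolP (j \in A)) => jA; first by rewrite !sgA.
have sA := sg_notA jA.
case: (sg_props jA) => _ d1 n1 p1.
case: (sg_props sA) => _ d2 n2 p2.
have : sg (sg j) \in [set j; sg j] by rewrite -d1 -p1 d2 !inE eqxx orbT.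
by rewrite !inE (negbTE n2) orbF => /eqP.
Qed.

Definition Pc (x : {set J}) (Fe : {set {set J}}) := x :|: cover Fe.

Lemma memP (x : {set J}) (Fe : {set {set J}}) j : x \subset A -> Fe \subset E ->
  (j \in Pc x Fe) = if j \in A then j \in x else pblock E j \in Fe.
Proof.
move=> xA FE; rewrite /Pc inE.
case: (boolP (j \in A)) => jA.
  case: (boolP (j \in cover Fe)); rewrite ?orbF ?orbT //.
  move=> /bigcupP[e eF je].
  have : j \in cover E by apply/bigcupP; exists e => //; apply: (subsetP FE).
  by rewrite HcovE inE jA.
have -> : (j \in x) = false by apply/negbTE; apply: contra jA; apply: (subsetP xA).
apply/bigcupP/idP => [[e eF je]|pF].
  by rewrite (def_pblock HtrivE (subsetP FE _ eF) je).
exists (pblock E j) => //; rewrite mem_pblock HcovE inE //.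
Qed.

Lemma sgP (x : {set J}) (Fe : {set {set J}}) j : x \subset A -> Fe \subset E ->
  (sg j \in Pc x Fe) = (j \in Pc x Fe).
Proof.
move=> xA FE; case: (boolP (j \in A)) => jA; first by rewrite sgA.
rewrite !memP // (negbTE jA) (negbTE (sg_notA jA)).
by case: (sg_props jA) => _ _ _ ->.
Qed.


Definition tau (K : {set J}) j :=
  if j \in K then odflt j [pick j' in K | (vtx j' == vtx j) && (j' != j)] else j.
Definition Kv (K : {set J}) v := [set j in K | vtx j == v].

Lemma tauK_in K j : (tau K j \in K) = (j \in K).
Proof.
rewrite /tau; case: (boolP (j \in K)) => jK; last by rewrite (negbTE jK).
by case: pickP => [i /andP[] | _] /=; rewrite ?jK.
Qed.

Lemma tau_vtx K j : vtx (tau K j) = vtx j.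
Proof.
rewrite /tau; case: (j \in K) => //.
by case: pickP => [i /and3P[_ /eqP] | _] /=.
Qed.

Section TauK.
Variable K : {set J}.
Hypothesis HK : forall v, #|Kv K v| <= 2.

Lemma tau_spec j : j \in K ->
  (tau K j = j /\ Kv K (vtx j) = [set j]) \/
  (tau K j != j /\ Kv K (vtx j) = [set j; tau K j]).
Proof.
move=> jK; rewrite /tau jK.
case: pickP => [i /and3P[iK /eqP iv nij] | none] /=.
  right; split => //.
  apply/eqP; rewrite eq_sym eqEcard; apply/andP; split.
    by apply/subsetP => k; rewrite !inE => /orP[] /eqP ->; rewrite ?jK ?iK ?iv eqxx.
  by apply: leq_trans (HK _) _; rewrite cards2 eq_sym nij.
left; split => //.
apply/setP => k; rewrite !inE; apply/andP/eqP => [[kK /eqP kv]|->]; last by rewrite jK eqxx.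
apply/eqP/negPn/negP => nkj.
by have := none k; rewrite kK kv eqxx nkj.
Qed.

Lemma Kv_tau j : j \in K -> Kv K (vtx j) = [set j; tau K j].
Proof.
by move=> jK; case: (tau_spec jK) => [[-> ->]|[_ ->]] //; rewrite setUid.
Qed.

Lemma tauK : involutive (tau K).
Proof.
move=> j; case: (boolP (j \in K)) => jK; last by rewrite /tau (negbTE jK) (negbTE jK).
case: (tau_spec jK) => [[e0 _]|[nj dj]]; first by rewrite !e0.
have jK' : tau K j \in K by rewrite tauK_in.
have jin : j \in Kv K (vtx (tau K j)) by rewrite tau_vtx inE jK eqxx.
case: (tau_spec jK') => [[e1 d1]|[n1 d1]].
  by move: jin nj; rewrite d1 inE => /eqP ej; rewrite -ej eqxx.
have : tau K (tau K j) \in Kv K (vtx (tau K j)) by rewrite d1 !inE eqxx orbT.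
by rewrite tau_vtx dj !inE (negbTE n1) orbF => /eqP.
Qed.

End TauK.

Definition valid (x : {set J}) (Fe : {set {set J}}) := ~~ [exists v, 2 <= degF vtx x Fe v].

Lemma degF_Kv x Fe v : degF vtx x Fe v = #|Kv (Pc x Fe) v|.
Proof. by []. Qed.

Lemma valid_le1 x Fe : valid x Fe -> forall v, #|Kv (Pc x Fe) v| <= 1.
Proof. by move=> /existsPn h v; rewrite leqNgt; exact: h v. Qed.

Definition Kof (x y : {set J}) (p : {set {set J}} * {set {set J}}) :=
  symdiff (Pc x p.1) (Pc y p.2).

Lemma HK_valid x y p : valid x p.1 -> valid y p.2 -> forall v, #|Kv (Kof x y p) v| <= 2.
Proof.
move=> v1 v2 v.
have sub : Kv (Kof x y p) v \subset Kv (Pc x p.1) v :|: Kv (Pc y p.2) v.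
  apply/subsetP => j; rewrite !inE.
  by case: (j \in x); case: (j \in y); case: (j \in cover p.1); case: (j \in cover p.2); case: (vtx j == v).
apply: leq_trans (subset_leq_card sub) _.
rewrite cardsU; apply: leq_trans (leq_subr _ _) _.
by have := valid_le1 v1 v; have := valid_le1 v2 v; lia.
Qed.

Definition rhoK K := rhoF sg (tau K).
Definition Mof K := equivalence_partition (fconnect (rhoK K)) (K :&: A).
Definition Orb K (S : {set J}) := [set b | [exists a in S, fconnect (rhoK K) a b]].
Definition EO K S := [set e in E | e \subset Orb K S].
Definition swap x y S p :=
  (symdiff p.1 (EO (Kof x y p) S), symdiff p.2 (EO (Kof x y p) S)).
Definition Dom0 x y (p : {set {set J}} * {set {set J}}) :=
  [&& p.1 \subset E, p.2 \subset E, valid x p.1 & valid y p.2].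
Definition wt x Fe := wtG vtx w lam x Fe.

Lemma wt_valid x Fe : valid x Fe ->
  wt x Fe = ((\prod_(v | #|Kv (Pc x Fe) v| == 0) lam v) * \prod_(e in Fe) w e)%R.
Proof. by move=> h; rewrite /wt /wtG (negbTE h). Qed.

Lemma KA (x y : {set J}) (p : {set {set J}} * {set {set J}}) : x \subset A -> y \subset A -> p.1 \subset E -> p.2 \subset E ->
  Kof x y p :&: A = symdiff x y.
Proof.
move=> xA yA p1 p2; apply/setP => j.
rewrite inE !in_symdiff !memP //; case: (boolP (j \in A)) => jA; rewrite ?andbT ?andbF //.
have -> : (j \in x) = false by apply/negbTE; apply: contra jA; apply: (subsetP xA).
by have -> : (j \in y) = false by apply/negbTE; apply: contra jA; apply: (subsetP yA).
Qed.

Lemma Mof_match (x y : {set J}) (p : {set {set J}} * {set {set J}}) : x \subset A -> y \subset A -> Dom0 x y p ->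
  Match' (symdiff x y) (Mof (Kof x y p)).
Proof.
move=> xA yA /and4P[p1 p2 v1 v2].
have HK := HK_valid v1 v2.
have inj : injective (rhoK (Kof x y p)) := rho_inj sgK (tauK HK).
apply/andP; split.
  rewrite -(KA xA yA p1 p2); apply: equivalence_partitionP.
  move=> a b c _ _ _; split; first exact: connect0.
  by move=> ab; apply: (same_connect (fconnect_sym inj) ab c).
apply/forall_inP => S /imsetP[a0 a0D ->].
set S0 := [set _ in _ | _].
have ge1 : 0 < #|S0| by apply/card_gt0P; exists a0; rewrite inE a0D connect0.
have a0A : a0 \in A by move: a0D; rewrite inE => /andP[].
have le2 : #|S0| <= 2.
  apply: leq_trans (fix_card sgK (tauK HK) (sgA a0A)).
  apply: subset_leq_card; apply/subsetP => b; rewrite !inE => /andP[/andP[_ bA] ab].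
  by rewrite /rhoK in ab; rewrite ab sgA // eqxx.
by move: ge1 le2; case: #|S0| => [|[|[|]]].
Qed.


Lemma inKv (X : {set J}) v j : (j \in Kv X v) = (j \in X) && (vtx j == v).
Proof. by rewrite inE. Qed.

Section Swap.
Variables (x y : {set J}) (p : {set {set J}} * {set {set J}}) (S : {set J}) (a0 : J).
Hypotheses (xA : x \subset A) (yA : y \subset A) (Dp : Dom0 x y p).
Local Notation K := (Kof x y p).
Local Notation P := (Pc x p.1).
Local Notation Q := (Pc y p.2).
Local Notation rho := (rhoK K).
Hypotheses (a0KA : a0 \in K :&: A) (Sdef : S = [set b in K :&: A | fconnect rho a0 b]).

Let p1E : p.1 \subset E. Proof. by case/and4P: Dp. Qed.
Let p2E : p.2 \subset E. Proof. by case/and4P: Dp. Qed.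
Let v1 : valid x p.1. Proof. by case/and4P: Dp. Qed.
Let v2 : valid y p.2. Proof. by case/and4P: Dp. Qed.
Let HK := HK_valid v1 v2.
Let injr : injective rho := rho_inj sgK (tauK HK).
Let a0K : a0 \in K. Proof. by move: a0KA; rewrite inE => /andP[]. Qed.
Let a0A : a0 \in A. Proof. by move: a0KA; rewrite inE => /andP[]. Qed.

Lemma L_sgK j : (sg j \in K) = (j \in K).
Proof. by rewrite !in_symdiff !sgP. Qed.

Lemma L_rhoK j : (rho j \in K) = (j \in K).
Proof. by rewrite /rhoK /rhoF L_sgK tauK_in. Qed.

Local Notation O := (Orb K S).

Lemma Orb_def : O = [set b | fconnect rho a0 b].
Proof.
apply/setP => b; rewrite !inE; apply/existsP/idP => [[a /andP[aS ab]]|ab].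
  by move: aS; rewrite Sdef inE => /andP[_ a0a]; apply: connect_trans a0a ab.
by exists a0; rewrite ab andbT Sdef inE a0KA connect0.
Qed.

Lemma O_K b : b \in O -> b \in K.
Proof.
rewrite Orb_def inE => ab; rewrite -(iter_findex ab).
elim: (findex rho a0 b) => [|k IH] //=.
by rewrite L_rhoK.
Qed.

Lemma O_sg b : b \in O -> sg b \in O.
Proof. rewrite !Orb_def !inE => h; exact: (sg_conn sgK (tauK HK) (sgA a0A) h). Qed.

Lemma O_rho b : b \in O -> rho b \in O.
Proof. by rewrite !Orb_def !inE => ab; apply: connect_trans ab (fconnect1 _ b). Qed.

Lemma O_tau b : b \in O -> tau K b \in O.
Proof.
move=> bO; have := O_sg (O_rho bO).
by rewrite /rhoK /rhoF sgK.
Qed.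

Lemma O_A j : j \in A -> (j \in O) = (j \in S).
Proof.
move=> jA; apply/idP/idP => h.
  rewrite Sdef; apply/setIdP; split; first by apply/setIP; split=> //; exact: O_K.
  by move: h; rewrite Orb_def inE.
by rewrite Orb_def inE; move: h; rewrite Sdef => /setIdP[].
Qed.

Lemma S_A : S \subset A.
Proof. by apply/subsetP => b; rewrite Sdef => /setIdP[/setIP[]]. Qed.

Lemma O_vert (X Y : {set J}) : K = symdiff X Y -> forall v,
  Kv (symdiff X O) v = if [exists j in O, vtx j == v] then Kv Y v else Kv X v.
Proof.
move=> KXY v.
case: (boolP [exists j in O, vtx j == v]) => [/exists_inP[k kO /eqP kv]|none].
  have kK := O_K kO.
  have dK := Kv_tau HK kK; rewrite kv in dK.
  apply/setP => j; rewrite !inKv in_symdiff.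
  case vj: (vtx j == v); rewrite ?andbF ?andbT //.
  have -> : (j \in O) = (j \in K).
    apply/idP/idP; first exact: O_K.
    move=> jK; have : j \in Kv K v by rewrite inKv jK vj.
    by rewrite dK in_set2 => /orP[] /eqP ->; [exact: kO | exact: O_tau].
  by rewrite KXY in_symdiff addbA addbb.
apply/setP => j; rewrite !inKv in_symdiff.
case vj: (vtx j == v); rewrite ?andbF ?andbT //.
case jO: (j \in O); rewrite ?addbF //.
by move/exists_inP: none; case; exists j.
Qed.

Lemma Pc_gen (z : {set J}) (F : {set {set J}}) : z \subset A -> F \subset E ->
  Pc (symdiff z S) (symdiff F (EO K S)) = symdiff (Pc z F) O.
Proof.
move=> zA FE.
have zSA : symdiff z S \subset A.
  apply/subsetP => j; rewrite in_symdiff.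
  case jz: (j \in z); case jS: (j \in S) => //= _.
  - by apply: (subsetP zA).
  - by apply: (subsetP S_A).
have FE' : symdiff F (EO K S) \subset E.
  apply/subsetP => e; rewrite in_symdiff inE.
  case eF: (e \in F) => /=; last by case/andP.
  by move=> _; apply: (subsetP FE _ eF).
apply/setP => j; rewrite in_symdiff !memP //.
case: (boolP (j \in A)) => jA; first by rewrite in_symdiff O_A.
rewrite in_symdiff; congr (_ (+) _).
case: (sg_props jA) => eE de _ _.
rewrite inE eE de /= subUset !sub1set.
apply/andP/idP => [[] //|jO]; split => //; exact: O_sg.
Qed.

Let Pc1 : Pc (symdiff x S) (swap x y S p).1 = symdiff P O.
Proof. exact: Pc_gen. Qed.
Let Pc2 : Pc (symdiff y S) (swap x y S p).2 = symdiff Q O.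
Proof. exact: Pc_gen. Qed.

Lemma Kof_swap : Kof (symdiff x S) (symdiff y S) (swap x y S p) = K.
Proof.
rewrite /Kof Pc1 Pc2; apply/setP => j.
by rewrite !in_symdiff; case: (j \in P); case: (j \in Q); case: (j \in O).
Qed.

Let KPQ : K = symdiff P Q. Proof. by []. Qed.
Let KQP : K = symdiff Q P.
Proof. by apply/setP => j; rewrite !in_symdiff addbC. Qed.

Lemma Dom0_swap : Dom0 (symdiff x S) (symdiff y S) (swap x y S p).
Proof.
have sub : forall F : {set {set J}}, F \subset E -> symdiff F (EO K S) \subset E.
  move=> F FE; apply/subsetP => e; rewrite in_symdiff inE.
  case eF: (e \in F) => /=; last by case/andP.
  by move=> _; apply: (subsetP FE _ eF).
apply/and4P; split; rewrite /swap /=; try exact: sub.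
  apply/existsPn => v; rewrite degF_Kv -/(swap x y S p).1 Pc1 (O_vert KPQ).
  by case: ifP => _; rewrite -leqNgt; apply: valid_le1.
apply/existsPn => v; rewrite degF_Kv -/(swap x y S p).2 Pc2 (O_vert KQP).
by case: ifP => _; rewrite -leqNgt; apply: valid_le1.
Qed.

Lemma swap_swap : swap (symdiff x S) (symdiff y S) S (swap x y S p) = p.
Proof. by rewrite {1}/swap Kof_swap /= !symdiffK; case: p. Qed.

Lemma wt_swap : (wt (symdiff x S) (swap x y S p).1 * wt (symdiff y S) (swap x y S p).2
  = wt x p.1 * wt y p.2)%R.
Proof.
have [_ _ v1' v2'] := and4P Dom0_swap.
rewrite !wt_valid // Pc1 Pc2.
rewrite mulrACA [RHS]mulrACA.
have hv : forall X Y : {set J},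
  ((\prod_(v | #|Kv X v| == 0) lam v) * (\prod_(v | #|Kv Y v| == 0) lam v) =
   \prod_v ((if #|Kv X v| == 0 then lam v else 1) * (if #|Kv Y v| == 0 then lam v else 1)))%R.
  by move=> X Y; rewrite big_split /= -!big_mkcond.
have he : forall F G : {set {set J}},
  ((\prod_(e in F) w e) * (\prod_(e in G) w e) =
   \prod_e ((if e \in F then w e else 1) * (if e \in G then w e else 1)))%R.
  by move=> F G; rewrite big_split /= -!big_mkcond.
congr (GRing.mul _ _).
  rewrite !hv; apply: eq_bigr => v _.
  rewrite (O_vert KPQ) (O_vert KQP).
  by case: (boolP [exists j in Orb K S, vtx j == v]) => _ /=; [exact: mulrC|].
rewrite !he; apply: eq_bigr => e _.
rewrite /swap /= !in_symdiff.
case eEO: (e \in EO K S); rewrite ?addbF //.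
have [eE esub] : e \in E /\ e \subset O by move: eEO; rewrite inE => /andP[].
have /card_gt0P[j je] : 0 < #|e| by rewrite Hcard2.
have jA : j \notin A.
  have : j \in cover E by apply/bigcupP; exists e.
  by rewrite HcovE inE.
have jK : j \in K := O_K (subsetP esub _ je).
move: jK; rewrite in_symdiff !memP // (negbTE jA) (def_pblock HtrivE eE je).
by case: (e \in p.1); case: (e \in p.2) => //= _; rewrite mulrC.
Qed.

End Swap.

Lemma swap_all (x y S : {set J}) (M : {set {set J}}) (p : {set {set J}} * {set {set J}}) : x \subset A -> y \subset A -> Dom0 x y p ->
  Mof (Kof x y p) = M -> S \in M ->
  [/\ Dom0 (symdiff x S) (symdiff y S) (swap x y S p),
      Mof (Kof (symdiff x S) (symdiff y S) (swap x y S p)) = M,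
      (wt (symdiff x S) (swap x y S p).1 * wt (symdiff y S) (swap x y S p).2
        = wt x p.1 * wt y p.2)%R
    & swap (symdiff x S) (symdiff y S) S (swap x y S p) = p].
Proof.
move=> xA yA Dp <- /imsetP[a0 a0D Sdef].
split.
- exact: Dom0_swap xA yA Dp a0D Sdef.
- by rewrite (Kof_swap xA yA Dp a0D Sdef).
- exact: wt_swap xA yA Dp a0D Sdef.
- exact: swap_swap xA yA Dp a0D Sdef.
Qed.

Lemma wt_ge0 (x : {set J}) (Fe : {set {set J}}) : Fe \subset E -> (0 <= wt x Fe)%R.
Proof.
move=> FE; rewrite /wt /wtG; case: ifP => _ //.
case: Hc => _ _ hw hl.
apply: mulr_ge0; apply: prodr_ge0 => i ii //.
by apply: hw; apply: (subsetP FE).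
Qed.

Lemma main : windable A (signature vtx E w lam).
Proof.
pose B x y M := (\sum_(p | Dom0 x y p && (Mof (Kof x y p) == M))
                   (wt x p.1 * wt y p.2))%R.
exists B; split.
- move=> x y M xA yA _; apply: sumr_ge0 => p /andP[/and4P[p1 p2 _ _] _].
  by apply: mulr_ge0; apply: wt_ge0.
- move=> x y xA yA.
  have wt0 : forall z F, ~~ valid z F -> wtG vtx w lam z F = 0%R.
    by move=> z F; rewrite /valid negbK /wtG => ->.
  rewrite /signature big_distrlr /= pair_big_dep /=.
  transitivity (\sum_(p | Dom0 x y p) (wt x p.1 * wt y p.2))%R.
    rewrite [RHS]big_mkcond [LHS]big_mkcond; apply: eq_bigr => p _.
    rewrite /Dom0; case: (p.1 \subset E); case: (p.2 \subset E) => //=.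
    case v1: (valid x p.1); case v2: (valid y p.2) => //=.
    + by rewrite (wt0 y) ?v2 // mulr0.
    + by rewrite (wt0 x) ?v1 // mul0r.
    + by rewrite (wt0 x) ?v1 // mul0r.
  rewrite (partition_big (fun p => Mof (Kof x y p)) (Match' (symdiff x y))) //.
  by move=> p Dp; apply: Mof_match.
- move=> x y S M xA yA HM SM.
  have SA : S \subset symdiff x y.
    case/andP: HM => /and3P[/eqP cov _ _] _.
    by rewrite -cov; apply: bigcup_sup.
  have sA : forall z : {set J}, z \subset A -> symdiff z S \subset A.
    move=> z zA; apply/subsetP => j; rewrite in_symdiff.
    case jz: (j \in z); case jS: (j \in S) => //= _; first exact: (subsetP zA).
    have := subsetP SA _ jS; rewrite in_symdiff.
    case jx: (j \in x); first by move=> _; apply: (subsetP xA).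
    by rewrite /= => jy; apply: (subsetP yA).
  have x'A := sA x xA; have y'A := sA y yA.
  rewrite /B [RHS](reindex_onto (swap x y S) (swap (symdiff x S) (symdiff y S) S)) /=.
    apply: eq_big => [p|p /andP[Dp /eqP Mp]].
      apply/andP/andP => [[Dp /eqP Mp]|[/andP[Dq /eqP Mq] /eqP back]].
        have [D' M' _ bk] := swap_all xA yA Dp Mp SM.
        by rewrite D' M' bk eqxx.
      have [D'' M'' _ _] := swap_all x'A y'A Dq Mq SM.
      rewrite !symdiffK back in D'' M''.
      by rewrite D'' M'' eqxx.
    by have [_ _ W _] := swap_all xA yA Dp Mp SM; rewrite W.
  move=> q /andP[Dq /eqP Mq].
  by have [_ _ _ ] := swap_all x'A y'A Dq Mq SM; rewrite !symdiffK.
Qed.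

End Circ.

Theorem lemma18 (J V : finType) (vtx : J -> V) (A : {set J})
  (E : {set {set J}}) (w : {set J} -> rat) (lam : V -> rat) :
  is_matching_circuit vtx A E w lam ->
  windable A (signature vtx E w lam).
Proof. by move=> Hc; apply: main Hc. Qed.
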